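(* Let $(G,\cdot)$ be a WIPL with identity $e$, let $(H,\circ)$ be a WIPL with identity $e'$, and let $(A,B,C)$ be an isotopism from $(G,\cdot)$ to $(H,\circ)$. Put $a'=eA$ and $b'=eB$. Assume that either $(x\circ y)^{\rho'}=x^{\rho'}\circ y^{\lambda'}$ for all $x,y\in H$, or $(x\circ y)^{\lambda'}=x^{\lambda'}\circ y^{\rho'}$ for all $x,y\in H$. Then $C$ is an isomorphism from $(G,\cdot)$ onto $(H,\circ)$ if and only if $(L_{b'}',R_{a'}',I)\in AUT(H,\circ)$. Moreover, in that case $(G,\cdot)$ and $(H,\circ)$ are (isomorphic) cross inverse property loops, $R_{a'}'L_{b'}'=I$ and $b'\circ a'=e'$.
   Context: Maps are written on the right of their arguments ($xU$) and composed left to right: $UV$ means first apply $U$, then $V$; $I$ is the identity map. For a loop $(L,\cdot)$ with identity $e$, $x^\rho$ and $x^\lambda$ denote the right and left inverses of $x$ ($x x^\rho=e=x^\lambda x$). For the loop $(H,\circ)$ with identity $e'$, $y^{\rho'}$, $y^{\lambda'}$ are the right and left inverses of $y$ in $H$, and $L_y':z\mapsto y\circ z$, $R_y':z\mapsto z\circ y$. $L$ is a weak inverse property loop (WIPL) if $xy\cdot z=e$ implies $x\cdot yz=e$ for all $x,y,z\in L$; it is a cross inverse property loop (CIPL) if $xy\cdot x^\rho=y$ for all $x,y\in L$. A triple $(U,V,W)$ of bijections $G\to H$ between loops $(G,\cdot)$ and $(H,\circ)$ is an isotopism if $xU\circ yV=(x\cdot y)W$ for all $x,y\in G$; an autotopism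 is an isotopism of a loop to itself, and $AUT(H,\circ)$ denotes the group of autotopisms under componentwise composition. *)

(* Defs.v *)
From Stdlib Require Import ClassicalEpsilon.
Set Implicit Arguments.

Record loop := Loop {
  car :> Type;
  lop : car -> car -> car;
  lid : car;
  lop_e_l : forall x, lop lid x = x;
  lop_e_r : forall x, lop x lid = x;
  lop_lsolve : forall a b, exists! x, lop a x = b;
  lop_rsolve : forall a b, exists! y, lop y a = b
}.

Lemma ex_of_exu (T : Type) (P : T -> Prop) : (exists! x, P x) -> exists x, P x.
Proof. intros [x [Hx _]]; exists x; exact Hx. Qed.

(* right inverse x^rho : x * x^rho = e *)
Definition rinv {L : loop} (x : L) : L :=
  proj1_sig (constructive_indefinite_description _
    (@ex_of_exu _ _ (lop_lsolve L x (lid L)))).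
(* left inverse x^lambda : x^lambda * x = e *)
Definition linv {L : loop} (x : L) : L :=
  proj1_sig (constructive_indefinite_description _
    (@ex_of_exu _ _ (lop_rsolve L x (lid L)))).

Definition Lt {L : loop} (y : L) : L -> L := fun z => lop L y z.
Definition Rt {L : loop} (y : L) : L -> L := fun z => lop L z y.

Definition bij {A B : Type} (f : A -> B) : Prop :=
  exists g : B -> A, (forall x, g (f x) = x) /\ (forall y, f (g y) = y).

Definition WIPL (L : loop) : Prop :=
  forall x y z : L, lop L (lop L x y) z = lid L -> lop L x (lop L y z) = lid L.

Definition CIPL (L : loop) : Prop :=
  forall x y : L, lop L (lop L x y) (rinv x) = y.

Definition isotopism {G H : loop} (U V W : G -> H) : Prop :=
  bij U /\ bij V /\ bij W /\
  forall x y : G, lop H (U x) (V y) = W (lop G x y).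

Definition autotopism {H : loop} (U V W : H -> H) : Prop := isotopism U V W.

Definition isomorphism {G H : loop} (C : G -> H) : Prop :=
  bij C /\ forall x y : G, C (lop G x y) = lop H (C x) (C y).

(* Main.v *)
Require Import Defs.
From Stdlib Require Import ClassicalEpsilon.
Set Implicit Arguments.
Unset Strict Implicit.

Lemma lcanc (L : loop) (a x y : L) : lop L a x = lop L a y -> x = y.
Proof.
  intro Hxy. destruct (lop_lsolve L a (lop L a x)) as [z [_ Hu]].
  rewrite <- (Hu x eq_refl). apply Hu. now symmetry.
Qed.

Lemma rcanc (L : loop) (a x y : L) : lop L x a = lop L y a -> x = y.
Proof.
  intro Hxy. destruct (lop_rsolve L a (lop L x a)) as [z [_ Hu]].
  rewrite <- (Hu x eq_refl). apply Hu. now symmetry.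
Qed.

Lemma rinv_spec (L : loop) (x : L) : lop L x (rinv x) = lid L.
Proof. unfold rinv. destruct constructive_indefinite_description; simpl; auto. Qed.

Lemma linv_spec (L : loop) (x : L) : lop L (linv x) x = lid L.
Proof. unfold linv. destruct constructive_indefinite_description; simpl; auto. Qed.

Lemma rinv_unique (L : loop) (x y : L) : lop L x y = lid L -> rinv x = y.
Proof. intro H. apply (lcanc (a:=x)). now rewrite rinv_spec. Qed.

Lemma linv_unique (L : loop) (x y : L) : lop L y x = lid L -> linv x = y.
Proof. intro H. apply (rcanc (a:=x)). now rewrite linv_spec. Qed.

Lemma rinv_linv (L : loop) (x : L) : rinv (linv x) = x.
Proof. apply rinv_unique, linv_spec. Qed.

Lemma Lt_bij (L : loop) (b : L) : bij (Lt b).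
Proof.
  exists (fun y => proj1_sig (constructive_indefinite_description _
    (@ex_of_exu _ _ (lop_lsolve L b y)))).
  split.
  - intro x. apply (lcanc (a:=b)).
    destruct constructive_indefinite_description; simpl; auto.
  - intro y. unfold Lt. destruct constructive_indefinite_description; simpl; auto.
Qed.

Lemma Rt_bij (L : loop) (b : L) : bij (Rt b).
Proof.
  exists (fun y => proj1_sig (constructive_indefinite_description _
    (@ex_of_exu _ _ (lop_rsolve L b y)))).
  split.
  - intro x. apply (rcanc (a:=b)).
    destruct constructive_indefinite_description; simpl; auto.
  - intro y. unfold Rt. destruct constructive_indefinite_description; simpl; auto.
Qed.

Lemma rinv_e (L : loop) : rinv (lid L) = lid L.
Proof. apply rinv_unique, lop_e_l. Qed.

Lemma inv_facts (H : loop) :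
  ((forall x y : H, rinv (lop H x y) = lop H (rinv x) (linv y)) \/
   (forall x y : H, linv (lop H x y) = lop H (linv x) (rinv y))) ->
  (forall x : H, linv x = rinv x) /\
  (forall x : H, rinv (rinv x) = x) /\
  (forall x y : H, rinv (lop H x y) = lop H (rinv x) (rinv y)).
Proof.
  intro Hyp.
  assert (E : forall x : H, linv x = rinv x).
  { destruct Hyp as [h|h]; intro x.
    - apply linv_unique.
      pose proof (h x (rinv x)) as k. rewrite rinv_spec, rinv_e in k.
      assert (linv (rinv x) = x) by (apply linv_unique, rinv_spec).
      rewrite H0 in k. now symmetry.
    - pose proof (h (linv x) x) as k. rewrite linv_spec in k.
      assert (linv (lid H) = lid H) by (apply linv_unique, lop_e_l).
      rewrite H0 in k. symmetry in k.
      pose proof (rinv_unique k) as k2.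
      rewrite rinv_linv in k2. exact k2. }
  assert (RR : forall x : H, rinv (rinv x) = x).
  { intro x. rewrite <- (E x). apply rinv_linv. }
  split; [exact E|split; [exact RR|]].
  intros x y. destruct Hyp as [h|h].
  - now rewrite h, E.
  - rewrite <- E, h, !E. reflexivity.
Qed.

Lemma K1 (H : loop) : WIPL H ->
  (forall x : H, rinv (rinv x) = x) ->
  (forall x y : H, rinv (lop H x y) = lop H (rinv x) (rinv y)) ->
  forall y x : H, lop H y (lop H x (rinv y)) = x.
Proof.
  intros W RR Hom y x.
  assert (k : forall x y : H, lop H y (lop H (rinv x) (rinv y)) = rinv x).
  { intros u v. apply (lcanc (a:=u)). rewrite rinv_spec.
    apply W. rewrite <- Hom. apply rinv_spec. }
  pose proof (k (rinv x) y) as k'. now rewrite !RR in k'.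
Qed.

Lemma CIPL_H (H : loop) : WIPL H ->
  (forall x : H, rinv (rinv x) = x) ->
  (forall x y : H, rinv (lop H x y) = lop H (rinv x) (rinv y)) ->
  CIPL H.
Proof.
  intros W RR Hom y x. apply (lcanc (a:=y)). apply (K1 W RR Hom).
Qed.

Lemma equiv_auto (H : loop) (a b : H) : WIPL H ->
  (forall x : H, rinv (rinv x) = x) ->
  (forall x y : H, rinv (lop H x y) = lop H (rinv x) (rinv y)) ->
  rinv a = b -> rinv b = a ->
  ((forall P Q : H, lop H (lop H P b) (lop H a Q) = lop H P Q) <->
   (forall X Y : H, lop H (lop H b X) (lop H Y a) = lop H X Y)).
Proof.
  intros W RR Hom Ha Hb.
  pose proof (CIPL_H W RR Hom) as C.
  pose proof (K1 W RR Hom) as k1.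
  assert (e1 : forall U, lop H (lop H a U) b = U).
  { intro U. pose proof (C (rinv b) U) as c. rewrite RR in c. now rewrite Hb in c. }
  assert (e2 : forall V, lop H a (lop H V b) = V).
  { intro V. rewrite <- Ha. apply k1. }
  assert (e3 : forall y, lop H (lop H b y) a = y).
  { intro y. rewrite <- Hb. apply C. }
  assert (e4 : forall y, lop H b (lop H y a) = y).
  { intro y. rewrite <- Hb. apply k1. }
  split; intro h.
  - intros X Y.
    assert (k : forall U V, lop H (lop H a U) (lop H V b) = lop H U V).
    { intros U V. pose proof (h (lop H a U) (lop H V b)) as hh.
      rewrite e1, e2 in hh. now symmetry. }
    pose proof (f_equal rinv (k (rinv X) (rinv Y))) as kk.
    rewrite !Hom, !RR, Ha, Hb in kk. exact kk.
  - intros P Q.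
    assert (k : forall U V, lop H (lop H U a) (lop H b V) = lop H U V).
    { intros U V. pose proof (h (lop H U a) (lop H b V)) as hh.
      rewrite e3, e4 in hh. now symmetry. }
    rewrite <- (RR (lop H (lop H P b) (lop H a Q))), <- (RR (lop H P Q)).
    f_equal. rewrite !Hom, Ha, Hb. apply k.
Qed.

Theorem mainTheorem5 (G H : loop) (A B C : G -> H) :
  WIPL G -> WIPL H ->
  isotopism A B C ->
  ((forall x y : H, rinv (lop H x y) = lop H (rinv x) (linv y)) \/
   (forall x y : H, linv (lop H x y) = lop H (linv x) (rinv y))) ->
  let a' := A (lid G) in
  let b' := B (lid G) in
  (isomorphism C <-> autotopism (Lt b') (Rt a') (fun x : H => x)) /\
  (isomorphism C ->
     CIPL G /\ CIPL H /\
     (* R'_{a'} L'_{b'} = I, maps composed left to right *)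
     (forall x : H, Lt b' (Rt a' x) = x) /\
     lop H b' a' = lid H).
Proof.
  intros WG WH [[gA [gA1 gA2]] [[gB [gB1 gB2]] [[gC [gC1 gC2]] Iso]]] Hyp a' b'.
  destruct (inv_facts Hyp) as [E [RR Hom]].
  assert (CA : forall x, C x = lop H (A x) b').
  { intro x. rewrite <- (lop_e_r G x) at 1. rewrite <- Iso. reflexivity. }
  assert (CB : forall y, C y = lop H a' (B y)).
  { intro y. rewrite <- (lop_e_l G y) at 1. rewrite <- Iso. reflexivity. }
  assert (Fwd : isomorphism C -> lop H a' b' = lid H /\
                forall P Q : H, lop H (lop H P b') (lop H a' Q) = lop H P Q).
  { intros [_ hom]. split.
    - assert (Ce : C (lid G) = lid H).
      { apply (rcanc (a:=C (lid G))). rewrite <- hom, lop_e_l, lop_e_l. reflexivity. }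
      rewrite <- Ce. unfold a', b'. rewrite Iso, lop_e_l. reflexivity.
    - intros P Q. rewrite <- (gA2 P), <- (gB2 Q), <- CA, <- CB, <- hom, Iso.
      reflexivity. }
  assert (Cinv : forall P Q : H, lop H (lop H P b') (lop H a' Q) = lop H P Q ->
     True) by auto.
  assert (BB : lop H b' a' = lid H -> rinv a' = b' /\ rinv b' = a').
  { intro h. assert (rinv b' = a') by (apply rinv_unique; exact h).
    split; [rewrite <- H0; apply RR | exact H0]. }
  assert (AB : lop H a' b' = lid H -> rinv a' = b' /\ rinv b' = a').
  { intro h. assert (rinv a' = b') by (apply rinv_unique; exact h).
    split; [exact H0 | rewrite <- H0; apply RR]. }
  assert (Part1 : isomorphism C <-> autotopism (Lt b') (Rt a') (fun x : H => x)).
  { split.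
    - intro hI. destruct (Fwd hI) as [h1 h2].
      destruct (AB h1) as [r1 r2].
      pose proof (proj1 (equiv_auto WH RR Hom r1 r2) h2) as h3.
      split; [apply Lt_bij|split; [apply Rt_bij|split]].
      + exists (fun x => x); split; reflexivity.
      + intros x y. apply h3.
    - intros [_ [_ [_ h]]].
      assert (h3 : forall X Y : H, lop H (lop H b' X) (lop H Y a') = lop H X Y)
        by (intros; apply h).
      assert (e : lop H b' a' = lid H).
      { pose proof (h3 (lid H) (lid H)) as k. rewrite !lop_e_r, lop_e_l in k.
        exact k. }
      destruct (BB e) as [r1 r2].
      pose proof (proj2 (equiv_auto WH RR Hom r1 r2) h3) as h2.
      split.
      + exists gC; split; auto.
      + intros x y. rewrite <- Iso, CA, CB. symmetry; apply h2. }
  split; [exact Part1|].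
  intro hI.
  destruct (proj1 Part1 hI) as [_ [_ [_ h]]].
  assert (h3 : forall X Y : H, lop H (lop H b' X) (lop H Y a') = lop H X Y)
    by (intros; apply h).
  assert (e : lop H b' a' = lid H).
  { pose proof (h3 (lid H) (lid H)) as k. rewrite !lop_e_r, lop_e_l in k. exact k. }
  destruct (BB e) as [r1 r2].
  pose proof (CIPL_H WH RR Hom) as CH.
  destruct hI as [_ hom].
  split; [|split; [exact CH|split; [|exact e]]].
  - assert (Ce : C (lid G) = lid H).
    { apply (rcanc (a:=C (lid G))). rewrite <- hom, lop_e_l, lop_e_l. reflexivity. }
    assert (Cr : forall x, C (rinv x) = rinv (C x)).
    { intro x. symmetry. apply rinv_unique. rewrite <- hom, rinv_spec. exact Ce. }
    assert (Cinj : forall u v, C u = C v -> u = v) by (intros u v huv; rewrite <- (gC1 u), <- (gC1 v), huv; reflexivity).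
    intros x y. apply Cinj.
    rewrite !hom, Cr. apply CH.
  - intro x. unfold Lt, Rt. rewrite <- r2. apply (K1 WH RR Hom).
Qed.
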